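(* Let $f:\mathbb{R}^2\to\mathbb{R}^2$ be $f(x,y)=(2x,\tfrac{1}{2}y)$ and let $g:\mathbb{R}^2\to\mathbb{R}^2$ be a homeomorphism topologically conjugate to $f$ (i.e. $g=h\circ f\circ h^{-1}$ for some homeomorphism $h$ of $\mathbb{R}^2$). Then $g$ does not satisfy the topological shadowing property.
   Context: Let $(X,d)$ be a metric space and $f:X\to X$ a homeomorphism; $\mathcal{C}^+=\{\epsilon:X\to\mathbb{R}^+ : \epsilon \text{ continuous}\}$. For $\delta\in\mathcal{C}^+$, a sequence $\{x_n\}_{n\in\mathbb{Z}}\subset X$ is a $\delta$-pseudo-orbit of $f$ if $d(f(x_n),x_{n+1})<\delta(f(x_n))$ for every $n\in\mathbb{Z}$. For $\epsilon\in\mathcal{C}^+$, the sequence $\{x_n\}$ is $\epsilon$-shadowed by an orbit if there is $y\in X$ with $d(f^n(y),x_n)<\epsilon(x_n)$ for every $n\in\mathbb{Z}$. The homeomorphism $f$ satisfies the topological shadowing property if for every $\epsilon\in\mathcal{C}^+$ there exists $\delta\in\mathcal{C}^+$ such that every $\delta$-pseudo-orbit is $\epsilon$-shadowed by an orbit. $\mathbb{R}^2$ carries the Euclidean metric. *)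

(* Defs.v *)
From Stdlib Require Import Reals ZArith.
Open Scope R_scope.

Definition R2 : Type := (R * R)%type.

Definition dist2 (p q : R2) : R :=
  sqrt ((fst p - fst q) ^ 2 + (snd p - snd q) ^ 2).

Definition cont22 (F : R2 -> R2) : Prop :=
  forall p e, 0 < e -> exists d, 0 < d /\
    forall q, dist2 q p < d -> dist2 (F q) (F p) < e.

Definition cont2R (F : R2 -> R) : Prop :=
  forall p e, 0 < e -> exists d, 0 < d /\
    forall q, dist2 q p < d -> Rabs (F q - F p) < e.

Definition is_homeo (F Finv : R2 -> R2) : Prop :=
  (forall p, Finv (F p) = p) /\ (forall p, F (Finv p) = p) /\
  cont22 F /\ cont22 Finv.

Definition Cplus (eps : R2 -> R) : Prop :=
  cont2R eps /\ forall p, 0 < eps p.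

Definition iterZ (F Finv : R2 -> R2) (n : Z) (p : R2) : R2 :=
  match n with
  | Z0 => p
  | Zpos k => Nat.iter (Pos.to_nat k) F p
  | Zneg k => Nat.iter (Pos.to_nat k) Finv p
  end.

Definition pseudo_orbit (F : R2 -> R2) (delta : R2 -> R) (x : Z -> R2) : Prop :=
  forall n : Z, dist2 (F (x n)) (x (n + 1)%Z) < delta (F (x n)).

Definition eps_shadowed (F Finv : R2 -> R2) (eps : R2 -> R) (x : Z -> R2) : Prop :=
  exists y : R2, forall n : Z, dist2 (iterZ F Finv n y) (x n) < eps (x n).

Definition topological_shadowing (F Finv : R2 -> R2) : Prop :=
  forall eps, Cplus eps -> exists delta, Cplus delta /\
    forall x : Z -> R2, pseudo_orbit F delta x -> eps_shadowed F Finv eps x.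

Definition f0 (p : R2) : R2 := (2 * fst p, / 2 * snd p).

(* Main.v *)
Require Import Defs.
From Stdlib Require Import Reals ZArith Lra Lia Classical Rgeom.
Open Scope R_scope.

Lemma dist2_sym p q : dist2 p q = dist2 q p.
Proof. unfold dist2. f_equal. ring. Qed.

Lemma dist2_refl p : dist2 p p = 0.
Proof. unfold dist2. replace ((fst p - fst p) ^ 2 + (snd p - snd p) ^ 2) with 0 by ring. apply sqrt_0. Qed.

Lemma dist2_tri p q r : dist2 p r <= dist2 p q + dist2 q r.
Proof.
  destruct p as [a b], q as [c d], r as [e f].
  pose proof (triangle a b e f c d) as H. unfold dist_euc, Rsqr in H.
  unfold dist2; cbn [fst snd]. replace ((a - e) ^ 2 + (b - f) ^ 2) with ((a - e) * (a - e) + (b - f) * (b - f)) by ring.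
  replace ((a - c) ^ 2 + (b - d) ^ 2) with ((a - c) * (a - c) + (b - d) * (b - d)) by ring.
  replace ((c - e) ^ 2 + (d - f) ^ 2) with ((c - e) * (c - e) + (d - f) * (d - f)) by ring.
  exact H.
Qed.

Lemma dist2_ge_fst p q : Rabs (fst p - fst q) <= dist2 p q.
Proof.
  unfold dist2. rewrite <- sqrt_Rsqr_abs. apply sqrt_le_1_alt. unfold Rsqr.
  pose proof (pow2_ge_0 (snd p - snd q)). nra.
Qed.

Lemma dist2_ge_snd p q : Rabs (snd p - snd q) <= dist2 p q.
Proof.
  unfold dist2. rewrite <- sqrt_Rsqr_abs. apply sqrt_le_1_alt. unfold Rsqr.
  pose proof (pow2_ge_0 (fst p - fst q)). nra.
Qed.

Lemma dist2_vert a b e : 0 <= e -> dist2 (a, b + e) (a, b) = e.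
Proof.
  intro He. unfold dist2; cbn [fst snd].
  replace ((a - a) ^ 2 + (b + e - b) ^ 2) with (Rsqr e) by (unfold Rsqr; ring).
  rewrite sqrt_Rsqr_abs. apply Rabs_right. lra.
Qed.

Lemma sig_lip a b : Rabs (/ (1 + a^2) - / (1 + b^2)) <= Rabs (a - b).
Proof.
  assert (Ha : 0 < 1 + a^2) by (pose proof (pow2_ge_0 a); lra).
  assert (Hb : 0 < 1 + b^2) by (pose proof (pow2_ge_0 b); lra).
  replace (/ (1 + a^2) - / (1 + b^2)) with ((b - a) * ((b + a) / ((1 + a^2) * (1 + b^2)))) by (field; lra).
  rewrite Rabs_mult. rewrite <- Rabs_minus_sym.
  rewrite <- (Rmult_1_r (Rabs (a - b))) at 2.
  apply Rmult_le_compat_l; [apply Rabs_pos|].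
  unfold Rdiv. rewrite Rabs_mult. rewrite Rabs_inv. rewrite (Rabs_right ((1 + a ^ 2) * (1 + b ^ 2))) by nra.
  apply (Rmult_le_reg_r ((1 + a ^ 2) * (1 + b ^ 2))); [nra|].
  rewrite Rmult_assoc, Rinv_l by nra. rewrite Rmult_1_r, Rmult_1_l.
  pose proof (pow2_ge_0 (a*b)). pose proof (pow2_ge_0 (a-/2)). pose proof (pow2_ge_0 (b-/2)). pose proof (pow2_ge_0 (a+/2)). pose proof (pow2_ge_0 (b+/2)).
  apply Rabs_le. split; nra.
Qed.

Lemma lub_gt (E : R -> Prop) m d : is_lub E m -> d < m -> exists r, E r /\ d < r.
Proof.
  intros [Hub Hl] Hd.
  apply NNPP. intro Hn. assert (is_upper_bound E d).
  { intros r Hr. destruct (Rle_dec r d) as [|Hr']; auto. exfalso. apply Hn. exists r. split; auto. lra. }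
  specialize (Hl d H). lra.
Qed.

Lemma modulus (F : R2 -> R2) (tau : R2 -> R) :
  cont22 F -> Cplus tau ->
  exists eps, Cplus eps /\ forall z q, dist2 q z < eps z -> dist2 (F q) (F z) < tau z.
Proof.
  intros HF [Htc Htp].
  set (Pz := fun z r => forall q1 q2, dist2 q1 z < r -> dist2 q2 z < r -> dist2 (F q1) (F q2) < tau q2).
  set (E := fun z r => 0 < r <= 1 /\ Pz z r).
  assert (Hb : forall z, bound (E z)).
  { intro z. exists 1. intros r [Hr _]. lra. }
  assert (Hne : forall z, exists r, E z r).
  { intro z. destruct (Htc z (tau z / 3)) as [d1 [Hd1 H1]]. { specialize (Htp z); lra. }
    destruct (HF z (tau z / 3)) as [d2 [Hd2 H2]]. { specialize (Htp z); lra. }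
    exists (Rmin 1 (Rmin d1 d2)). split.
    { split. apply Rmin_glb_lt; [lra|]. apply Rmin_glb_lt; lra. apply Rmin_l. }
    intros q1 q2 Hq1 Hq2.
    pose proof (Rle_trans _ _ _ (Rmin_r 1 (Rmin d1 d2)) (Rmin_l d1 d2)) as Hm1.
    pose proof (Rle_trans _ _ _ (Rmin_r 1 (Rmin d1 d2)) (Rmin_r d1 d2)) as Hm2.
    specialize (H1 q2 ltac:(lra)). specialize (H2 q1 ltac:(lra)) as H2a.
    specialize (H2 q2 ltac:(lra)) as H2b.
    pose proof (dist2_tri (F q1) (F z) (F q2)). rewrite (dist2_sym (F z) (F q2)) in H.
    apply Rabs_def2 in H1. lra. }
  assert (X : forall z, {m | is_lub (E z) m}).
  { intro z. apply completeness; auto. }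
  exists (fun z => proj1_sig (X z) / 2).
  assert (Hpos : forall z, 0 < proj1_sig (X z)).
  { intro z. destruct (X z) as [m [Hu Hl]]; simpl. destruct (Hne z) as [r Hr].
    specialize (Hu r Hr). destruct Hr. lra. }
  assert (Hle1 : forall z, proj1_sig (X z) <= 1).
  { intro z. destruct (X z) as [m [Hu Hl]]; simpl. apply Hl. intros r [Hr _]; lra. }
  assert (Hlip : forall z z', proj1_sig (X z) - dist2 z z' <= proj1_sig (X z')).
  { intros z z'. destruct (Rle_dec (proj1_sig (X z) - dist2 z z') (proj1_sig (X z'))) as [|Hn]; auto.
    exfalso. apply Rnot_le_lt in Hn.
    destruct (lub_gt (E z) (proj1_sig (X z)) (proj1_sig (X z') + dist2 z z') (proj2_sig (X z)) ltac:(lra))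
      as [r [[Hr1 HrP] Hr2]].
    assert (E z' (r - dist2 z z')).
    { pose proof (Hpos z'). pose proof (sqrt_pos ((fst z - fst z') ^ 2 + (snd z - snd z') ^ 2)) as Hd.
      fold (dist2 z z') in Hd.
      split. lra.
      intros q1 q2 Hq1 Hq2. apply HrP.
      - pose proof (dist2_tri q1 z' z). rewrite (dist2_sym z' z) in H0. lra.
      - pose proof (dist2_tri q2 z' z). rewrite (dist2_sym z' z) in H0. lra. }
    destruct (proj2_sig (X z')) as [Hu _]. specialize (Hu _ H). lra. }
  split; [split|].
  - intros p e He. exists e. split; auto. intros q Hq.
    pose proof (Hlip q p). pose proof (Hlip p q). rewrite dist2_sym in H0.
    apply Rabs_def1; lra.
  - intro z. specialize (Hpos z). lra.
  - intros z q Hq.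
    destruct (lub_gt (E z) (proj1_sig (X z)) (dist2 q z) (proj2_sig (X z)) ltac:(specialize (Hpos z); lra))
      as [r [[Hr1 HrP] Hr2]].
    apply HrP; auto. rewrite dist2_refl. lra.
Qed.

Definition f0inv (p : R2) : R2 := (/ 2 * fst p, 2 * snd p).

Lemma iter_f0 k p : Nat.iter k f0 p = (2 ^ k * fst p, / 2 ^ k * snd p).
Proof.
  induction k; simpl.
  - destruct p; simpl. f_equal; field.
  - rewrite IHk. unfold f0; simpl. f_equal. ring. rewrite Rinv_mult. ring.
Qed.

Lemma iter_f0inv k p : Nat.iter k f0inv p = (/ 2 ^ k * fst p, 2 ^ k * snd p).
Proof.
  induction k; simpl.
  - destruct p; simpl. f_equal; field.
  - rewrite IHk. unfold f0inv; simpl. f_equal. rewrite Rinv_mult. ring. ring.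
Qed.

Lemma iterZ_pos F Finv k p : iterZ F Finv (Z.of_nat k) p = Nat.iter k F p.
Proof. destruct k; simpl; auto. rewrite SuccNat2Pos.id_succ. auto. Qed.

Lemma iterZ_neg F Finv k p : iterZ F Finv (- Z.of_nat k) p = Nat.iter k Finv p.
Proof. destruct k; simpl; auto. rewrite SuccNat2Pos.id_succ. auto. Qed.

Lemma conj_iter (g ginv h hinv : R2 -> R2) :
  is_homeo h hinv -> is_homeo g ginv -> (forall p, g p = h (f0 (hinv p))) ->
  forall k y, Nat.iter k g y = h (Nat.iter k f0 (hinv y)) /\
              Nat.iter k ginv y = h (Nat.iter k f0inv (hinv y)).
Proof.
  intros [Hh1 [Hh2 _]] [Hg1 [Hg2 _]] Hc.
  assert (Hgi : forall q, ginv q = h (f0inv (hinv q))).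
  { intro q. rewrite <- (Hg1 (h (f0inv (hinv q)))). f_equal. rewrite Hc, Hh1.
    assert (E : forall x, f0 (f0inv x) = x).
    { intros [a b]. unfold f0, f0inv; simpl. f_equal; field. }
    rewrite E, Hh2. auto. }
  induction k; intro y; simpl.
  - auto.
  - destruct (IHk y) as [A B]. rewrite A, B, Hc, Hgi, !Hh1. auto.
Qed.

Lemma arith t v eta : 1 <= t -> / t < eta -> Rabs (t * v - t) < 1 ->
  Rabs (/ (2 * t) * v - / t * (/ 2 + eta)) < / (1 + (t * 2) ^ 2) -> False.
Proof.
  intros Ht Hs H1 H2.
  assert (Hts : t * / t = 1) by (field; lra).
  assert (HR : (1 + (t*2)^2) * / (1 + (t * 2) ^ 2) = 1) by (field; nra).
  assert (HRp : 0 < / (1 + (t * 2) ^ 2)) by (apply Rinv_0_lt_compat; nra).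
  assert (Hte : 1 < t * eta).
  { rewrite <- Hts. apply Rmult_lt_compat_l; lra. }
  replace (/ (2 * t) * v - / t * (/ 2 + eta)) with (/ t * ((v - 1)/2 - eta)) in H2 by (field; lra).
  apply Rabs_def2 in H1. apply Rabs_def2 in H2. destruct H1 as [H1a H1b]. destruct H2 as [H2a H2b].
  set (RR := / (1 + (t * 2) ^ 2)) in *. set (s := / t) in *.
  assert (A : - RR * (4 * t * t) < s * ((v - 1) / 2 - eta) * (4 * t * t)).
  { apply Rmult_lt_compat_r; nra. }
  assert (B : s * ((v - 1) / 2 - eta) * (4 * t * t) = 2 * (t * v - t) - 4 * t * eta).
  { transitivity ((t * s) * (2 * t * (v-1) - 4 * t * eta)). unfold s; field; lra.
    rewrite Hts. unfold s; field; lra. }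
  assert (C : RR * (4 * t * t) < 1) by nra.
  lra.
Qed.

Theorem mainTheorem4 (g ginv h hinv : R2 -> R2) :
  is_homeo h hinv ->
  is_homeo g ginv ->
  (forall p, g p = h (f0 (hinv p))) ->
  ~ topological_shadowing g ginv.
Proof.
  intros Hh Hg Hc Hsh.
  pose proof (conj_iter g ginv h hinv Hh Hg Hc) as Hit.
  destruct Hh as [Hh1 [Hh2 [Hhc Hhic]]].
  set (sig := fun p : R2 => / (1 + (fst p) ^ 2)).
  assert (Hsp : forall p, 0 < sig p).
  { intro p. unfold sig. apply Rinv_0_lt_compat. pose proof (pow2_ge_0 (fst p)). lra. }
  assert (Hs1 : forall p, sig p <= 1).
  { intro p. unfold sig. rewrite <- Rinv_1. apply Rinv_le_contravar. lra. pose proof (pow2_ge_0 (fst p)). lra. }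
  set (tau := fun z => sig (hinv z)).
  assert (Htau : Cplus tau).
  { split; [|intro; apply Hsp].
    intros p e He. destruct (Hhic p e He) as [d [Hd Hd']]. exists d. split; auto.
    intros q Hq. unfold tau, sig.
    eapply Rle_lt_trans. apply sig_lip. eapply Rle_lt_trans. apply dist2_ge_fst. auto. }
  destruct (modulus hinv tau Hhic Htau) as [eps [Heps Hmod]].
  destruct (Hsh eps Heps) as [delta [[_ Hdp] Hpo]].
  set (P := (1, 1) : R2).
  destruct (Hhc (f0 P) (delta (h (f0 P))) (Hdp _)) as [d0 [Hd0 Hd0']].
  set (eta := d0 / 2).
  assert (Heta : 0 < eta) by (unfold eta; lra).
  set (Q := (fst (f0 P), snd (f0 P) + eta) : R2).
  set (x := fun n => if Z.leb n 0 then iterZ f0 f0inv n P else iterZ f0 f0inv (n - 1) Q).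
  assert (Hxn : forall k, x (- Z.of_nat k)%Z = (/ 2 ^ k, 2 ^ k)).
  { intro k. unfold x. destruct (Z.leb_spec (- Z.of_nat k) 0); [|lia].
    rewrite iterZ_neg, iter_f0inv. unfold P; simpl fst; simpl snd. f_equal; ring. }
  assert (Hxp : forall k, x (Z.of_nat (S k)) = (2 ^ k * 2, / 2 ^ k * (/ 2 + eta))).
  { intro k. unfold x. destruct (Z.leb_spec (Z.of_nat (S k)) 0); [lia|].
    replace (Z.of_nat (S k) - 1)%Z with (Z.of_nat k) by lia.
    rewrite iterZ_pos, iter_f0. unfold Q, P, f0; simpl fst; simpl snd. f_equal; ring. }
  assert (Hgh : forall X, g (h X) = h (f0 X)).
  { intro X. rewrite Hc, Hh1. auto. }
  assert (Hps : pseudo_orbit g delta (fun n => h (x n))).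
  { intro n.
    assert (Hcase : n = 0%Z \/ (exists k, n = Z.of_nat (S k)) \/ (exists k, n = (- Z.of_nat (S k))%Z)).
    { destruct n. left; auto. right; left; exists (Pos.to_nat p - 1)%nat; lia.
      right; right; exists (Pos.to_nat p - 1)%nat; lia. }
    rewrite Hgh.
    destruct Hcase as [E | [[k E] | [k E]]]; subst n.
    - replace (x 0%Z) with P by reflexivity.
      replace (x (0 + 1)%Z) with Q by reflexivity.
      rewrite dist2_sym. apply Hd0'. unfold Q. destruct (f0 P) as [a b]. simpl fst; simpl snd.
      rewrite dist2_vert by lra. unfold eta; lra.
    - replace (Z.of_nat (S k) + 1)%Z with (Z.of_nat (S (S k))) by lia.
      rewrite !Hxp. unfold f0; simpl fst; simpl snd.
      replace (2 * (2 ^ k * 2)) with (2 ^ S k * 2) by (simpl; ring).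
      replace (/ 2 * (/ 2 ^ k * (/ 2 + eta))) with (/ 2 ^ S k * (/ 2 + eta))
        by (simpl; rewrite Rinv_mult; ring).
      rewrite dist2_refl. apply Hdp.
    - replace (- Z.of_nat (S k) + 1)%Z with (- Z.of_nat k)%Z by lia.
      rewrite !Hxn. unfold f0; simpl fst; simpl snd.
      assert (H2k : 2 ^ k <> 0) by (apply pow_nonzero; lra).
      replace (2 * / (2 * 2 ^ k)) with (/ 2 ^ k) by (field; auto).
      replace (/ 2 * (2 * 2 ^ k)) with (2 ^ k) by field.
      rewrite dist2_refl. apply Hdp. }
  destruct (Hpo _ Hps) as [y Hy].
  set (w := hinv y).
  assert (Key : forall n X, iterZ g ginv n y = h X -> dist2 X (x n) < sig (x n)).
  { intros n X HX. specialize (Hy n). rewrite HX in Hy.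
    specialize (Hmod _ _ Hy). unfold tau in Hmod. rewrite !Hh1 in Hmod. exact Hmod. }
  destruct (pow_lt_1_zero (/ 2) ltac:(rewrite Rabs_right; lra) eta Heta) as [N HN].
  specialize (HN N (le_n _)). rewrite Rabs_right in HN by (apply Rle_ge, pow_le; lra).
  rewrite pow_inv in HN.
  assert (Kb := Key (- Z.of_nat N)%Z (Nat.iter N f0inv w)).
  rewrite iterZ_neg, (proj2 (Hit N y)) in Kb. specialize (Kb eq_refl). rewrite Hxn, iter_f0inv in Kb.
  assert (Kf := Key (Z.of_nat (S N)) (Nat.iter (S N) f0 w)).
  rewrite iterZ_pos, (proj1 (Hit (S N) y)) in Kf. specialize (Kf eq_refl). rewrite Hxp, iter_f0 in Kf.
  pose proof (Rle_lt_trans _ _ _ (dist2_ge_snd _ _) Kb) as Kb'.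
  pose proof (Rle_lt_trans _ _ _ (dist2_ge_snd _ _) Kf) as Kf'.
  simpl fst in *; simpl snd in *. unfold sig in Kb', Kf'; simpl fst in Kb', Kf'.
  apply (arith (2 ^ N) (snd w) eta).
  - apply pow_R1_Rle. lra.
  - exact HN.
  - eapply Rlt_le_trans. exact Kb'. apply (Hs1 (/ 2 ^ N, 2 ^ N)).
  - exact Kf'.
Qed.
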